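(* Let $\mathcal{X}$ and $\mathcal{Y}$ be finite additive groups, let $n,m\ge 1$, and let $F:\mathcal{X}^n\to\mathcal{Y}^m$ be a random function (a random variable taking values in the set of all maps $\mathcal{X}^n\to\mathcal{Y}^m$). Let $\Sigma_n$ and $\Sigma_m$ be uniformly distributed random permutations of the $n$ coordinates of $\mathcal{X}^n$ and of the $m$ coordinates of $\mathcal{Y}^m$, respectively, with $\Sigma_n$, $\Sigma_m$, $F$ mutually independent, and set $\tilde F=\Sigma_m\circ F\circ\Sigma_n$. Then for every $\mathbf{x}\in\mathcal{X}^n$ and $\mathbf{y}\in\mathcal{Y}^m$, $$\Pr\{\tilde F(\mathbf{x})=\mathbf{y}\}=|\mathcal{Y}|^{-m}\,\alpha(F)(P_{\mathbf{x}},P_{\mathbf{y}}).$$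
   Context: For a sequence $\mathbf{x}\in\mathcal{X}^n$, its type $P_{\mathbf{x}}$ is the distribution on $\mathcal{X}$ given by $P_{\mathbf{x}}(a)=N(a|\mathbf{x})/n$, where $N(a|\mathbf{x})$ is the number of occurrences of $a$ in $\mathbf{x}$; $\mathcal{P}_n(\mathcal{X})$ denotes the set of types of sequences in $\mathcal{X}^n$ (similarly for $\mathcal{Y}^m$). A permutation of coordinates acts on $\mathcal{X}^n$ by permuting the entries of a sequence. For a (deterministic) map $f:\mathcal{X}^n\to\mathcal{Y}^m$, its joint spectrum is $S_{\mathcal{X}\mathcal{Y}}(f)(P,Q)=|\{\mathbf{x}\in\mathcal{X}^n: P_{\mathbf{x}}=P,\ P_{f(\mathbf{x})}=Q\}|/|\mathcal{X}|^n$. For $P\in\mathcal{P}_n(\mathcal{X})$, $Q\in\mathcal{P}_m(\mathcal{Y})$, set $\binom{n}{nP}=n!/\prod_{a\in\mathcal{X}}(nP(a))!$, $\binom{m}{mQ}=m!/\prod_{b\in\mathcal{Y}}(mQ(b))!$, and for a random map $F$ define $$\alpha(F)(P,Q)=\frac{E[S_{\mathcal{X}\mathcal{Y}}(F)(P,Q)]}{\binom{n}{nP}\binom{m}{mQ}\,|\mathcal{X}|^{-n}|\mathcal{Y}|^{-m}}.$$ *)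

(* Defs.v *)
From HB Require Import structures.
From mathcomp Require Import all_boot all_order all_fingroup all_algebra.
Set Implicit Arguments. Unset Strict Implicit. Unset Printing Implicit Defensive.
Import Order.TTheory GRing.Theory Num.Theory.
Local Open Scope ring_scope.

Section Defs.
Variable R : archiRealFieldType.

Definition vecn (X : finType) (n : nat) := {ffun 'I_n -> X}.

Definition ptype (X : finType) (n : nat) (x : vecn X n) : {ffun X -> R} :=
  [ffun a => (#|[set i | x i == a]|)%:R / n%:R].

Definition multinom (X : finType) (n : nat) (P : {ffun X -> R}) : R :=
  (n`!)%:R / \prod_(a : X) ((Num.truncn (n%:R * P a))`!)%:R.

Definition joint_spectrum (X Y : finType) (n m : nat)
  (f : vecn X n -> vecn Y m) (P : {ffun X -> R}) (Q : {ffun Y -> R}) : R :=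
  #|[set x : vecn X n | (ptype x == P) && (ptype (f x) == Q)]|%:R
    / (#|X| ^ n)%:R.

(* a random map F is given by its probability mass function pF on the finite
   set of all maps X^n -> Y^m *)
Definition is_pmf (T : finType) (p : T -> R) :=
  (forall t, 0 <= p t) /\ \sum_(t : T) p t = 1.

Definition alpha (X Y : finType) (n m : nat)
  (pF : {ffun vecn X n -> vecn Y m} -> R) (P : {ffun X -> R}) (Q : {ffun Y -> R}) : R :=
  (\sum_(f : {ffun vecn X n -> vecn Y m}) pF f * joint_spectrum f P Q)
  / (multinom n P * multinom m Q * ((#|X| ^ n)%:R)^-1 * ((#|Y| ^ m)%:R)^-1).

Definition permute (X : finType) (n : nat) (s : 'S_n) (x : vecn X n) : vecn X n :=
  [ffun i => x (s i)].

(* Pr{ Sigma_m o F o Sigma_n (x) = y } with Sigma_n, Sigma_m uniform on the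
   symmetric groups and Sigma_n, Sigma_m, F mutually independent
   (joint law = product of the marginals) *)
Definition prob_tilde (X Y : finType) (n m : nat)
  (pF : {ffun vecn X n -> vecn Y m} -> R) (x : vecn X n) (y : vecn Y m) : R :=
  \sum_(s : 'S_n) \sum_(t : 'S_m) \sum_(f : {ffun vecn X n -> vecn Y m})
    ((#|'S_n|%:R)^-1 * (#|'S_m|%:R)^-1 * pF f) *
    (permute t (f (permute s x)) == y)%:R.
End Defs.

(* Main.v *)
Require Import Defs.
From HB Require Import structures.
From mathcomp Require Import all_boot all_order all_fingroup all_algebra.
From mathcomp Require Import ring.
Import Order.TTheory GRing.Theory Num.Theory.
Set Implicit Arguments. Unset Strict Implicit. Unset Printing Implicit Defensive.

Section Core.
Variables (D T X : finType) (c : T -> X) (d : D -> X) (t0 : T).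

Definition Sset (A : {set D}) := [set f : {ffun D -> T} |
  [forall i, (i \notin A) ==> (f i == t0)] &&
  [forall i in A, c (f i) == d i] &&
  [forall i in A, forall j in A, (f i == f j) ==> (i == j)]].

Lemma SsetP (A : {set D}) (f : {ffun D -> T}) : reflect
  [/\ forall i, i \notin A -> f i = t0, forall i, i \in A -> c (f i) = d i &
      {in A &, injective f}] (f \in Sset A).
Proof.
rewrite inE; apply: (iffP idP).
  case/andP=> /andP[/forallP h1 /forall_inP h2] /forall_inP h3; split.
  - by move=> i /(implyP (h1 i)) /eqP.
  - by move=> i /h2 /eqP.
  - by move=> i j iA jA fij; move: (h3 i iA) => /forall_inP /(_ j jA) /implyP; rewrite fij eqxx => /(_ isT) /eqP.
case=> h1 h2 h3; apply/andP; split; first (apply/andP; split).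
- by apply/forallP => i; apply/implyP => /h1 ->.
- by apply/forall_inP => i /h2 ->.
- apply/forall_inP => i iA; apply/forall_inP => j jA; apply/implyP => /eqP fij.
  by rewrite (h3 _ _ iA jA fij).
Qed.

Definition upd (g : {ffun D -> T}) i0 u : {ffun D -> T} :=
  [ffun i => if i == i0 then u else g i].

Lemma card_Sset A : #|Sset A| =
  \prod_(a : X) #|[set t | c t == a]| ^_ #|[set i in A | d i == a]|.
Proof.
move: {2}#|A| (erefl #|A|) => k; elim: k A => [|k IH] A hA.
  have -> : A = set0 by apply/cards0_eq.
  rewrite big1 => [|a _]; last first.
    by rewrite (_ : [set i in set0 | _] = set0) ?cards0 ?ffactn0 //; apply/setP=> i; rewrite !inE.
  apply/eqP/cards1P; exists [ffun=> t0]; apply/setP => f; rewrite inE.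
  apply/SsetP/eqP => [[h1 _ _]|->].
    by apply/ffunP => i; rewrite ffunE h1 ?inE.
  by split=> // i; rewrite ?inE ?ffunE.
have [i0 i0A] : {i0 | i0 \in A}.
  by case: (pickP (mem A)) => [i0 ?|/eq_card0]; [exists i0 | rewrite hA].
set A' := A :\ i0.
have hA' : #|A'| = k by move: hA; rewrite (cardsD1 i0) i0A => -[].
have i0A' : i0 \notin A' by rewrite !inE eqxx.
set a0 := d i0.
set U := fun g : {ffun D -> T} => [set u | c u == a0] :\: (g @: A').
have key : forall g, g \in Sset A' ->
   [set f in Sset A | upd f i0 t0 == g] = (upd g i0) @: U g.
  move=> g /SsetP [g1 g2 g3]; apply/setP => f; rewrite inE.
  apply/andP/imsetP => [[/SsetP [f1 f2 f3] /eqP eg]|[u]].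
    have gf : forall j, j != i0 -> g j = f j.
      by move=> j jn; rewrite -eg ffunE (negbTE jn).
    exists (f i0).
      rewrite !inE f2 // eqxx andbT; apply/imsetP => -[j jA' fj].
      move: (jA'); rewrite !inE => /andP[jn jA].
      by move: (jn); rewrite (f3 _ _ i0A jA (etrans fj (gf j jn))) eqxx.
    by apply/ffunP => i; rewrite ffunE; case: eqP => [->|/eqP /gf].
  rewrite inE => /andP [/imsetP nimg]; rewrite inE => /eqP cu ->; split.
    apply/SsetP; split.
    - move=> i iA; rewrite ffunE; case: eqP => [ei|/eqP ni]; first by move: iA; rewrite ei i0A.
      by apply: g1; rewrite !inE ni.
    - move=> i iA; rewrite ffunE; case: eqP => [->|/eqP ni]; first by rewrite cu.
      by apply: g2; rewrite !inE ni.
    - move=> i j iA jA; rewrite !ffunE.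
      case: eqP => [->|/eqP ni]; case: eqP => [->|/eqP nj] //.
      + by move=> e; case: nimg; exists j; rewrite // !inE nj.
      + by move=> e; case: nimg; exists i; rewrite // !inE ni.
      + by apply: g3; rewrite !inE ?ni ?nj.
  apply/eqP/ffunP => i; rewrite !ffunE; case: eqP => [->|] //.
  by rewrite g1.
have cardU : forall g, g \in Sset A' ->
   #|U g| = #|[set t | c t == a0]| - #|[set i in A' | d i == a0]|.
  move=> g /SsetP [g1 g2 g3]; rewrite cardsD; congr (_ - _).
  have -> : [set t | c t == a0] :&: g @: A' = g @: [set i in A' | d i == a0].
    apply/setP => t; rewrite in_setI in_set; apply/andP/imsetP => [[ct /imsetP[j jA' et]]|[j]].
      by exists j => //; rewrite in_set jA' -(g2 _ jA') -et.
    rewrite in_set => /andP[jA' /eqP dj] ->; split; first by rewrite g2 ?dj.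
    by apply: imset_f.
  rewrite card_in_imset // => i j; rewrite !inE => /andP[iA _] /andP[jA _].
  by apply: g3; rewrite !inE ?iA ?jA.
have step : #|Sset A| = #|Sset A'| *
   (#|[set t | c t == a0]| - #|[set i in A' | d i == a0]|).
  rewrite -sum1_card (partition_big (fun f => upd f i0 t0) (mem (Sset A'))) /=; last first.
    move=> f /SsetP [f1 f2 f3]; apply/SsetP; split.
    - move=> i; rewrite ffunE; case: eqP => // /eqP ni iA'; apply: f1.
      by apply: contra iA' => iA; rewrite !inE ni.
    - move=> i; rewrite !inE ffunE => /andP[/negbTE -> iA]; exact: f2.
    - move=> i j; rewrite !inE !ffunE => /andP[/negbTE -> iA] /andP[/negbTE -> jA].
      exact: f3.
  rewrite -sum_nat_const; apply: eq_bigr => g gS.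
  rewrite -(cardU g gS) -(card_imset _ (_ : injective (upd g i0))); last first.
    by move=> u v /ffunP /(_ i0); rewrite !ffunE eqxx.
  by rewrite -(key g gS) sum1dep_card; apply: eq_card => f; rewrite !inE.
rewrite step IH // (bigD1 a0) //= [in RHS](bigD1 a0) //= mulnAC.
congr (_ * _); last first.
  apply: eq_bigr => a na0; congr (_ ^_ _); apply: eq_card => i; rewrite !inE.
  by case: eqP => [->|//]; rewrite -/a0 eq_sym (negbTE na0) !andbF.
rewrite -ffactnSr; congr (_ ^_ _).
rewrite (cardsD1 i0 [set i in A | d i == a0]) !inE i0A eqxx /=; congr (_.+1).
by apply: eq_card => i; rewrite !inE andbA.
Qed.
End Core.

Definition cnt (X : finType) n (w : {ffun 'I_n -> X}) (a : X) := #|[set i | w i == a]|.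

Lemma card_perm_ff (X : finType) n (t0 : 'I_n) (w w' : {ffun 'I_n -> X}) :
  #|[set s : 'S_n | [ffun i => w (s i)] == w']| =
  \prod_a cnt w a ^_ cnt w' a.
Proof.
have -> : \prod_a cnt w a ^_ cnt w' a = #|Sset w w' t0 setT|.
  rewrite card_Sset; apply: eq_bigr => a _; congr (_ ^_ _).
  by apply: eq_card => i; rewrite !inE.
rewrite -(card_imset _ (@val_inj _ _ (perm_type 'I_n))).
congr #|pred_of_set _|; apply/setP => f; apply/imsetP/SsetP.
  case=> s; rewrite inE => /eqP ew ->; split => //.
  - by move=> i; rewrite inE.
  - by move=> i _; rewrite -ew ffunE pvalE.
  - by move=> i j _ _; rewrite pvalE; apply: perm_inj.
case=> _ h2 h3.
have injf : injective f by move=> i j; apply: h3; rewrite inE.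
exists (perm injf).
  by rewrite inE; apply/eqP/ffunP => i; rewrite !ffunE permE h2.
by apply/ffunP => i; rewrite pvalE permE.
Qed.

Lemma card_perm_cnt (X : finType) n (t0 : 'I_n) (w w' : {ffun 'I_n -> X}) :
  #|[set s : 'S_n | [ffun i => w (s i)] == w']| =
  if [forall a, cnt w a == cnt w' a] then \prod_a (cnt w a)`! else 0.
Proof.
case: ifP => h.
  rewrite (card_perm_ff t0); apply: eq_bigr => a _.
  by rewrite (eqP (forallP h a)) ffactnn.
apply/eqP; rewrite cards_eq0; apply/eqP/setP => s; rewrite !inE.
apply/negbTE/negP => /eqP ew; move/negbT: h; apply/negP; rewrite negbK.
apply/forallP => a; rewrite /cnt -ew.
rewrite -(card_preimset _ (@perm_inj _ s)); apply/eqP/eq_card => i.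
by rewrite !inE ffunE.
Qed.

Section Main.
Variable R : archiRealFieldType.
Local Open Scope ring_scope.

Lemma sum_nat_card (T : finType) (P : pred T) :
  \sum_i ((P i)%:R : R) = (#|[set i | P i]|)%:R.
Proof.
rewrite -sum1dep_card natr_sum [RHS]big_mkcond; apply: eq_bigr => i _.
by case: (P i).
Qed.

Lemma ptype_eq (X : finType) n (hn : (0 < n)%N) (w w' : vecn X n) :
  (ptype R w == ptype R w') = [forall a, cnt w a == cnt w' a].
Proof.
have nz : (n%:R : R)^-1 != 0 by rewrite invr_neq0 // pnatr_eq0 -lt0n.
apply/eqP/forallP => [h a | h].
  move/ffunP: h => /(_ a); rewrite !ffunE => /(mulIf nz)/eqP.
  by rewrite eqr_nat.
by apply/ffunP => a; rewrite !ffunE; move: (eqP (h a)); rewrite /cnt => ->.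
Qed.

Lemma multinom_ptype (X : finType) n (hn : (0 < n)%N) (w : vecn X n) :
  multinom n (ptype R w) = n`!%:R / (\prod_a (cnt w a)`!)%:R.
Proof.
rewrite /multinom natr_prod; congr (_ / _); apply: eq_bigr => a _.
rewrite ffunE mulrC divfK ?pnatr_eq0 -?lt0n //.
congr ((_`!)%:R); by apply: truncn_def; rewrite lexx ltr_nat ltnSn.
Qed.
End Main.

Local Open Scope ring_scope.

Theorem proposition3 (R : archiRealFieldType) (X Y : finZmodType) (n m : nat)
  (hn : (1 <= n)%N) (hm : (1 <= m)%N)
  (pF : {ffun vecn X n -> vecn Y m} -> R) (hpF : is_pmf pF)
  (x : vecn X n) (y : vecn Y m) :
  prob_tilde pF x y =
    ((#|Y| ^ m)%:R)^-1 * alpha pF (ptype R x) (ptype R y).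
Proof.
pose t0n : 'I_n := Ordinal hn. pose t0m : 'I_m := Ordinal hm.
set Kx := (\prod_a (cnt x a)`!)%N.
set Ky := (\prod_a (cnt y a)`!)%N.
pose C (f : {ffun vecn X n -> vecn Y m}) :=
  #|[set z : vecn X n | (ptype R z == ptype R x) && (ptype R (f z) == ptype R y)]|.
have hT : forall z : vecn Y m,
    \sum_(t : 'S_m) ((permute t z == y)%:R : R) =
    (ptype R z == ptype R y)%:R * Ky%:R.
  move=> z; rewrite sum_nat_card (card_perm_cnt t0m) -(ptype_eq R) //.
  case: ifP => h; last by rewrite mul0r.
  rewrite mul1r; congr (_%:R); apply: eq_bigr => a _.
  by move: h; rewrite (ptype_eq R) // => /forallP /(_ a) /eqP ->.
have hS : forall G : vecn X n -> R,
    \sum_(s : 'S_n) G (permute s x) =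
    \sum_z G z * ((ptype R x == ptype R z)%:R * Kx%:R).
  move=> G; rewrite (partition_big (fun s => permute s x) predT) //=.
  apply: eq_bigr => z _.
  rewrite (eq_bigr (fun _ => G z)) => [|s /eqP -> //].
  have -> : \sum_(i | permute i x == z) G z = G z * \sum_(i | permute i x == z) 1.
    by rewrite mulr_sumr; apply: eq_bigr => *; rewrite mulr1.
  congr (_ * _).
  have -> : \sum_(i | permute i x == z) (1 : R) = \sum_i ((permute i x == z)%:R : R).
    by rewrite big_mkcond; apply: eq_bigr => s _; case: (_ == _).
  rewrite sum_nat_card.
  have -> : #|[set s : 'S_n | permute s x == z]| = #|[set s : 'S_n | [ffun i => x (s i)] == z]| by [].
  rewrite (card_perm_cnt t0n) -(ptype_eq R) //.
  case: ifP => h; last by rewrite mul0r.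
  by rewrite mul1r.
have inner : forall f : {ffun vecn X n -> vecn Y m},
    \sum_(s : 'S_n) \sum_(t : 'S_m) ((permute t (f (permute s x)) == y)%:R : R) =
    (C f)%:R * (Kx%:R * Ky%:R).
  move=> f; under eq_bigr => s _ do rewrite hT.
  rewrite (hS (fun z => (ptype R (f z) == ptype R y)%:R * Ky%:R)).
  rewrite /C -sum_nat_card mulr_suml; apply: eq_bigr => z _.
  rewrite (eq_sym (ptype R x)).
  by case: (_ == _); case: (_ == _); rewrite /= ?mul0r ?mulr0 ?mul1r ?mulr1 // mulrC.
rewrite /prob_tilde.
under eq_bigr => s _ do rewrite exchange_big.
rewrite exchange_big /=.
set ci := (#|'S_n|%:R)^-1 * (#|'S_m|%:R)^-1.
set S := \sum_(f : {ffun vecn X n -> vecn Y m}) pF f * (C f)%:R.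
transitivity (S * (ci * (Kx%:R * Ky%:R))).
  rewrite /S mulr_suml; apply: eq_bigr => f _.
  transitivity ((ci * pF f) * ((C f)%:R * (Kx%:R * Ky%:R))); last by ring.
  rewrite -(inner f) mulr_sumr.
  by apply: eq_bigr => s _; rewrite mulr_sumr.
rewrite /alpha /joint_spectrum !multinom_ptype //.
have -> : \sum_(f : {ffun vecn X n -> vecn Y m})
     pF f * ((#|[set x0 | (ptype R x0 == ptype R x) && (ptype R (f x0) == ptype R y)]|)%:R
              / (#|X| ^ n)%:R) = S / (#|X| ^ n)%:R.
  by rewrite /S mulr_suml; apply: eq_bigr => f _; rewrite mulrA.
rewrite /ci !card_Sn.
have hX : (#|X| ^ n)%:R != 0 :> R.
  by rewrite pnatr_eq0 -lt0n expn_gt0; apply/orP; left; apply/card_gt0P; exists (0 : X).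
have hY : (#|Y| ^ m)%:R != 0 :> R.
  by rewrite pnatr_eq0 -lt0n expn_gt0; apply/orP; left; apply/card_gt0P; exists (0 : Y).
have hKx : Kx%:R != 0 :> R by rewrite pnatr_eq0 -lt0n prodn_gt0 // => a; rewrite fact_gt0.
have hKy : Ky%:R != 0 :> R by rewrite pnatr_eq0 -lt0n prodn_gt0 // => a; rewrite fact_gt0.
have hnf : n`!%:R != 0 :> R by rewrite pnatr_eq0 -lt0n fact_gt0.
have hmf : m`!%:R != 0 :> R by rewrite pnatr_eq0 -lt0n fact_gt0.
field.
by rewrite hX hY hKx hKy hnf hmf.
Qed.
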